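(* Let $(X,d)$ be an ultrametric space, i.e. $d(x,y)\le\max(d(x,z),d(y,z))$ for all $x,y,z\in X$. Then every slowly oscillating function $f:X\to\mathbb R$ is glacially oscillating.
   Context: A function $g:X\to\mathbb R$ on a metric space is slowly oscillating if for all $r,\epsilon>0$ there is a bounded $K\subset X$ such that $x,y\in X\setminus K$ and $d(x,y)<r$ imply $|g(x)-g(y)|<\epsilon$. A glacial scale on a metric space $X$ is a sequence $\mathcal S=\{(K_i,n_i)\}_{i\ge1}$ of pairs, each $K_i$ a bounded subset of $X$ and $n_i$ a natural number, such that for every bounded $K\subset X$ and every $r>0$ there is $i$ with $K\subset K_i$ and $n_i>r$. An $\mathcal S$-chain is a finite sequence $x_1,\dots,x_n$ of points of $X$ such that for each $i\le n-1$ there is $m\ge1$ with $x_i,x_{i+1}\notin K_m$ and $d(x_i,x_{i+1})\le n_m$. A function $f:X\to\mathbb R$ is glacially oscillating if for every $\epsilon>0$ there is a glacial scale $\mathcal S$ such that $|f(x_1)-f(x_n)|<\epsilon$ for every $\mathcal S$-chain $x_1,\dots,x_n$. *)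

(* Defs.v *)
From Stdlib Require Export Reals.
Open Scope R_scope.

Definition is_metric {X : Type} (d : X -> X -> R) : Prop :=
  (forall x y, 0 <= d x y) /\
  (forall x y, d x y = 0 <-> x = y) /\
  (forall x y, d x y = d y x) /\
  (forall x y z, d x z <= d x y + d y z).

Definition is_ultrametric {X : Type} (d : X -> X -> R) : Prop :=
  forall x y z, d x y <= Rmax (d x z) (d y z).

(* Subsets of X are predicates X -> Prop. A set is bounded if it has finite
   diameter (this makes the empty set bounded). *)
Definition bounded {X : Type} (d : X -> X -> R) (K : X -> Prop) : Prop :=
  exists r : R, forall x y, K x -> K y -> d x y <= r.

Definition slowly_oscillating {X : Type} (d : X -> X -> R) (g : X -> R) : Prop :=
  forall r eps : R, 0 < r -> 0 < eps ->
    exists K : X -> Prop, bounded d K /\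
      forall x y, ~ K x -> ~ K y -> d x y < r -> Rabs (g x - g y) < eps.

(* A glacial scale {(K_i, n_i)}_{i>=1}, indexed here by i : nat starting at 0. *)
Definition glacial_scale {X : Type} (d : X -> X -> R)
  (Ks : nat -> (X -> Prop)) (ns : nat -> nat) : Prop :=
  (forall i, bounded d (Ks i)) /\
  (forall K : X -> Prop, bounded d K -> forall r : R, 0 < r ->
     exists i, (forall x, K x -> Ks i x) /\ r < INR (ns i)).

Definition scale_step {X : Type} (d : X -> X -> R)
  (Ks : nat -> (X -> Prop)) (ns : nat -> nat) (a b : X) : Prop :=
  exists m, ~ Ks m a /\ ~ Ks m b /\ d a b <= INR (ns m).

(* An S-chain x_0, ..., x_n (n+1 points, n >= 0). *)
Definition scale_chain {X : Type} (d : X -> X -> R)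
  (Ks : nat -> (X -> Prop)) (ns : nat -> nat) (x : nat -> X) (n : nat) : Prop :=
  forall i, (i < n)%nat -> scale_step d Ks ns (x i) (x (S i)).

Definition glacially_oscillating {X : Type} (d : X -> X -> R) (f : X -> R) : Prop :=
  forall eps : R, 0 < eps ->
    exists (Ks : nat -> (X -> Prop)) (ns : nat -> nat),
      glacial_scale d Ks ns /\
      forall (x : nat -> X) (n : nat), scale_chain d Ks ns x n ->
        Rabs (f (x O) - f (x n)) < eps.

(* Main.v *)
Require Import Defs.
From Stdlib Require Import Reals Lra Lia Classical ClassicalEpsilon.
Open Scope R_scope.

Lemma nat_big (A : R) : exists n : nat, A < INR n.
Proof. destruct (INR_archimed 1 A) as [n Hn]; [lra|]. exists n; lra. Qed.

Lemma ultra_iso {X : Type} (d : X -> X -> R) :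
  is_metric d -> is_ultrametric d ->
  forall p a b, d a b < d p a -> d p b = d p a.
Proof.
  intros [_ [_ [Hs _]]] Hu p a b H.
  pose proof (Hu p b a) as H1. pose proof (Hu p a b) as H2.
  rewrite (Hs b a) in H1.
  unfold Rmax in *. destruct (Rle_dec (d p a) (d a b)); destruct (Rle_dec (d p b) (d a b)); lra.
Qed.

Theorem proposition3p4 (X : Type) (d : X -> X -> R)
  (hmet : is_metric d) (hultra : is_ultrametric d) (f : X -> R) :
  slowly_oscillating d f -> glacially_oscillating d f.
Proof.
  intros SO eps Heps.
  destruct hmet as [Hpos [Hz [Hs Htri]]].
  destruct (classic (inhabited X)) as [[p]|Hne].
  2:{ exists (fun _ _ => False), (fun i => i). split.
      - split.
        + intros i. exists 0. intros x y [].
        + intros K _ r _. destruct (nat_big r) as [n Hn]. exists n. split; [|exact Hn].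
          intros x _. exfalso. apply Hne. exact (inhabits x).
      - intros x n _. exfalso. apply Hne. exact (inhabits (x O)). }
  assert (exR : forall i : nat, exists R, INR i <= R /\ forall x y, R < d p x -> R < d p y ->
            d x y <= INR i -> Rabs (f x - f y) < eps).
  { intros i. destruct (SO (INR i + 1) eps) as [K [[D HD] HK]];
      [pose proof (pos_INR i); lra | exact Heps |].
    destruct (classic (exists q, K q)) as [[q Hq]|Hnq].
    - exists (Rmax (INR i) (d p q + D)). split; [apply Rmax_l|].
      intros x y Hx Hy Hxy. apply HK.
      + intros Kx. pose proof (HD q x Hq Kx). pose proof (Htri p q x).
        pose proof (Rmax_r (INR i) (d p q + D)). lra.
      + intros Ky. pose proof (HD q y Hq Ky). pose proof (Htri p q y).
        pose proof (Rmax_r (INR i) (d p q + D)). lra.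
      + lra.
    - exists (INR i). split; [lra|]. intros x y _ _ Hxy. apply HK.
      + intros Kx; apply Hnq; eauto.
      + intros Ky; apply Hnq; eauto.
      + lra. }
  set (Rf := fun i => proj1_sig (constructive_indefinite_description _ (exR i))).
  assert (HRf : forall i, INR i <= Rf i /\ forall x y, Rf i < d p x -> Rf i < d p y ->
            d x y <= INR i -> Rabs (f x - f y) < eps).
  { intros i. unfold Rf. exact (proj2_sig (constructive_indefinite_description _ (exR i))). }
  exists (fun i x => d p x <= Rf i), (fun i => i). split.
  - split.
    + intros i. exists (2 * Rf i). intros x y Hx Hy.
      pose proof (Htri x p y). rewrite (Hs x p) in *. lra.
    + intros K [D HD] r Hr.
      destruct (classic (exists q, K q)) as [[q Hq]|Hnq].
      * destruct (nat_big (Rmax r (d p q + D))) as [n Hn]. exists n.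
        pose proof (Rmax_l r (d p q + D)). pose proof (Rmax_r r (d p q + D)).
        destruct (HRf n) as [H1 _].
        split; [|lra]. intros x Kx. pose proof (HD q x Hq Kx). pose proof (Htri p q x). lra.
      * destruct (nat_big r) as [n Hn]. exists n. split; [|exact Hn].
        intros x Kx. exfalso; apply Hnq; eauto.
  - intros x n Hch.
    assert (Inv : forall k, (k <= n)%nat -> k = O \/
      (d p (x k) = d p (x O) /\ exists m, Rf m < d p (x O) /\ d (x O) (x k) <= INR m)).
    { induction k as [|k IH]; intros Hk; [left; reflexivity|]. right.
      destruct (Hch k ltac:(lia)) as [m' [H1 [H2 H3]]].
      apply Rnot_le_lt in H1. apply Rnot_le_lt in H2.
      destruct (HRf m') as [Hm' _].
      assert (Hiso : d p (x (S k)) = d p (x k)).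
      { apply (ultra_iso d (conj Hpos (conj Hz (conj Hs Htri))) hultra). lra. }
      destruct (IH ltac:(lia)) as [->|[Heq [m [Hm1 Hm2]]]].
      - split; [exact Hiso|]. exists m'. split; [lra|exact H3].
      - split; [lra|].
        pose proof (hultra (x O) (x (S k)) (x k)) as Hu. rewrite (Hs (x (S k)) (x k)) in Hu.
        unfold Rmax in Hu.
        destruct (Rle_dec (INR m) (INR m')).
        + exists m'. split; [lra|]. destruct (Rle_dec (d (x O) (x k)) (d (x k) (x (S k)))); lra.
        + exists m. split; [lra|]. destruct (Rle_dec (d (x O) (x k)) (d (x k) (x (S k)))); lra. }
    destruct (Inv n (le_n n)) as [->|[Heq [m [Hm1 Hm2]]]].
    + unfold Rminus. rewrite Rplus_opp_r, Rabs_R0. exact Heps.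
    + destruct (HRf m) as [_ Hf]. apply Hf; lra.
Qed.
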